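(* In the two-door cascading memoryless semi-fractional setting, let $\pi^\star$ be an optimal semi-fractional sequence, and let $\theta=-c\log(q_1)/p_2$ and $\psi=\frac12\big(\sqrt{\theta^2+4\theta}-\theta\big)$ (natural logarithms). Then $$\mathbb{E}[\pi^\star]\in\frac{1}{\log(1/q_1)}\left(\log\frac{1}{1-\psi}+\frac{\theta}{\psi}+1\right)-\left[0,\frac{p_2}{\log(1/q_1)}\right],$$ where $a-[0,b]$ denotes the interval $[a-b,a]$.
   Context: Two cascading memoryless doors with durations: parameters $p_1,p_2\in(0,1)$, $q_1=1-p_1$, $q_2=1-p_2$, and $c>0$. Both doors start closed. A semi-fractional sequence is an infinite alternating sequence of knocks $1^{t_1}\,2\,1^{t_2}\,2\cdots$ with real $t_j\ge0$. A 1-knock $1^t$ takes $t$ time units and, if door 1 is closed, opens it with probability $1-q_1^t$, independently of everything else. A 2-knock takes $c$ time units and opens door 2 with probability $p_2$ (independently) if door 1 is open at that time, and with probability $0$ otherwise. There is no feedback. The running time is the time at which both doors are open, and $\mathbb{E}[\pi]$ is its expectation for sequence $\pi$; $\pi^\star$ is optimal if $\mathbb{E}[\pi^\star]\le\mathbb{E}[\pi]$ for all semi-fractional $\pi$. *)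

(* Defs.v *)
From HB Require Import structures.
From mathcomp Require Import all_boot all_order all_algebra.
From mathcomp Require Import all_classical all_reals.
From mathcomp Require Import ereal topology normedtype sequences exp.
Set Implicit Arguments. Unset Strict Implicit. Unset Printing Implicit Defensive.
Import Order.TTheory GRing.Theory Num.Theory.
Local Open Scope ring_scope.

Section TwoDoors.
Variable R : realType.

(* A semi-fractional sequence 1^{t_1} 2 1^{t_2} 2 ... is encoded by
   t : nat -> R, with t k = t_{k+1}; it must satisfy t k >= 0. *)
Definition semifrac (t : nat -> R) : Prop := forall k, 0 <= t k.

(* Distribution of the state of the doors after the first k phases
   (a phase being 1^{t_j} followed by a 2-knock):
   first component  = P(door 1 closed),
   second component = P(door 1 open and door 2 closed).
   In phase k+1 the 1-knock of length t k opens a closed door 1 with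
   probability 1 - q1^(t k); then the 2-knock opens door 2 with
   probability p2 iff door 1 is open. *)
Fixpoint door_state (p1 p2 : R) (t : nat -> R) (k : nat) : R * R :=
  match k with
  | 0 => (1, 0)
  | k'.+1 =>
      let ab := door_state p1 p2 t k' in
      let r := (1 - p1) `^ (t k') in
      (ab.1 * r, (1 - p2) * (ab.2 + ab.1 * (1 - r)))
  end.

Definition not_done (p1 p2 : R) (t : nat -> R) (k : nat) : R :=
  (door_state p1 p2 t k).1 + (door_state p1 p2 t k).2.

(* Expected running time (possibly +oo): tail-sum formula
   E[T] = sum_k (duration of phase k+1) * P(T > end of phase k),
   phase k+1 lasting t k + c time units. *)
Definition exp_time (p1 p2 c : R) (t : nat -> R) : \bar R :=
  (\sum_(0 <= k <oo) ((t k + c) * not_done p1 p2 t k)%:E)%E.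

Definition optimal (p1 p2 c : R) (t : nat -> R) : Prop :=
  semifrac t /\
  forall t' : nat -> R, semifrac t' -> (exp_time p1 p2 c t <= exp_time p1 p2 c t')%E.

End TwoDoors.

(* Main.v *)
Require Import Defs.
From HB Require Import structures.
From mathcomp Require Import all_boot all_order all_algebra.
From mathcomp Require Import all_classical all_reals.
From mathcomp Require Import ereal topology normedtype sequences exp.
From mathcomp.algebra_tactics Require Import ring lra.
Import Order.TTheory GRing.Theory Num.Theory.
Local Open Scope ring_scope.

Section Aux.
Variable R : realType.

Lemma ln_le_sub1 (x : R) : 0 < x -> ln x <= x - 1.
Proof.
move=> x0; have := @le_ln1Dx R (x - 1).
have -> : 1 + (x - 1) = x by ring.
apply; lra.
Qed.

Lemma ln_div_le (x y : R) : 0 < x -> 0 < y -> ln x <= ln y + x / y - 1.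
Proof.
move=> x0 y0.
have h : ln (x / y) <= x / y - 1.
  by apply: ln_le_sub1; apply: divr_gt0.
rewrite lnM ?posrE ?invr_gt0 // lnV ?posrE // in h.
lra.
Qed.

Lemma lower_step (p2 s lam c D N t r theta K : R) :
  0 < p2 < 1 -> 0 < s < 1 -> 0 < lam -> lam * c = p2 * ((1-s)^+2/s) ->
  0 < D -> D <= N -> 0 <= t ->
  r = expR (- (lam * t)) ->
  theta = (1-s)^+2/s ->
  K = - ln s + (1 - s) + 1 - p2 ->
  theta * N + N * ln (D / N) + K * N <=
  lam * ((t + c) * N) +
  (theta * ((1-p2) * N + p2 * (D * r)) +
   ((1-p2) * N + p2 * (D * r)) * ln ((D * r) / ((1-p2) * N + p2 * (D * r))) +
   K * ((1-p2) * N + p2 * (D * r))).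
Proof.
move=> /andP[p20 p21] /andP[s0 s1] lam0 hc D0 DN t0 hr htheta hK.
have N0 : 0 < N by exact: (lt_le_trans D0 DN).
have r0 : 0 < r by rewrite hr; apply: expR_gt0.
have r1 : r <= 1 by rewrite hr expR_le1; nra.
set w := D * r / N.
have w0 : 0 < w by rewrite /w divr_gt0 // mulr_gt0.
have w1 : w <= 1.
  rewrite /w ler_pdivrMr // mul1r; nra.
have Dr : D * r = w * N by rewrite /w mulrVK //; apply/unitf_gt0.
set z := 1 - p2 + p2 * w.
have z0 : 0 < z by rewrite /z; nra.
have Nz : (1 - p2) * N + p2 * (D * r) = z * N by rewrite Dr /z; ring.
rewrite Nz.
have lnDN : ln (D / N) = ln w + lam * t.
  have -> : D / N = w * expR (lam * t).
    rewrite /w hr expRN; field; apply/andP; split.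
      by apply/lt0r_neq0.
    by apply/lt0r_neq0; apply: expR_gt0.
  by rewrite lnM ?posrE ?expR_gt0 // expRK.
have lnw : ln (D * r / (z * N)) = ln w - ln z.
  have -> : D * r / (z * N) = w / z.
    rewrite /w; field; apply/andP; split; apply/lt0r_neq0 => //.
  by rewrite lnM ?posrE ?invr_gt0 // lnV ?posrE.
rewrite lnDN lnw.
have Hz : ln z <= z - 1.
  exact: ln_le_sub1.
have Hw := @ln_div_le w s w0 s0.
have Hz2 : z * ln z <= z * (z - 1) by rewrite ler_wpM2l // ltW.
have Hw2 : (1 - z) * ln w <= (1 - z) * (ln s + w / s - 1).
  by rewrite ler_wpM2l //; rewrite /z; nra.
have key : lam * c + z * (1 - z) - (1 - z) * (theta + w / s + 1 - s - p2)
   = p2 * ((s - w)^+2 / s + p2 * w * (1 - w)).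
  rewrite hc /z htheta; field; by apply/lt0r_neq0.
have pos : 0 <= p2 * ((s - w)^+2 / s + p2 * w * (1 - w)).
  apply: mulr_ge0; first lra.
  apply: addr_ge0; first by apply: divr_ge0; [apply: sqr_ge0|lra].
  apply: mulr_ge0; [apply: mulr_ge0|]; lra.
suff : theta + ln w + K <= lam * c + theta * z + z * (ln w - ln z) + K * z.
  move=> h.
  have : N * (theta + ln w + K) <= N * (lam * c + theta * z + z * (ln w - ln z) + K * z).
    by rewrite ler_wpM2l // ltW.
  move=> h2.
  have e1 : theta * N + N * (ln w + lam * t) + K * N = N * (theta + ln w + K) + lam * t * N by ring.
  have e2 : lam * ((t + c) * N) + (theta * (z * N) + z * N * (ln w - ln z) + K * (z * N))
     = N * (lam * c + theta * z + z * (ln w - ln z) + K * z) + lam * t * N by ring.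
  rewrite e1 e2; lra.
rewrite hK.
nra.
Qed.

End Aux.

Section Doors.
Variable R : realType.
Variables (p1 p2 c : R) (t : nat -> R).
Hypothesis hp1 : 0 < p1 < 1.
Hypothesis hp2 : 0 < p2 < 1.
Hypothesis ht : semifrac t.

Let lam := - ln (1 - p1).
Let D k := (door_state p1 p2 t k).1.
Let B k := (door_state p1 p2 t k).2.
Let N k := not_done p1 p2 t k.
Let r k := (1 - p1) `^ (t k).

Lemma lam_gt0 : 0 < lam.
Proof.
rewrite /lam oppr_gt0; apply: ln_lt0; case/andP: hp1 => h1 h2; apply/andP; split; lra.
Qed.

Lemma rE k : r k = expR (- (lam * t k)).
Proof.
rewrite /r /powR; case: eqP => [|_]; first by case/andP: hp1 => h1 h2; lra.
by congr expR; rewrite /lam; ring.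
Qed.

Lemma r_pos k : 0 < r k.
Proof. by rewrite rE expR_gt0. Qed.

Lemma r_le1 k : r k <= 1.
Proof.
rewrite rE expR_le1 oppr_le0; apply: mulr_ge0; [exact: ltW lam_gt0 | exact: ht].
Qed.

Lemma D_succ k : D k.+1 = D k * r k.
Proof. by []. Qed.

Lemma B_succ k : B k.+1 = (1 - p2) * (B k + D k * (1 - r k)).
Proof. by []. Qed.

Lemma N_def k : N k = D k + B k.
Proof. by []. Qed.

Lemma N_succ k : N k.+1 = (1 - p2) * N k + p2 * (D k * r k).
Proof. rewrite !N_def D_succ B_succ; ring. Qed.

Lemma D_pos k : 0 < D k.
Proof.
elim: k => [|k IH]; first by rewrite /D /= ltr01.
by rewrite D_succ mulr_gt0 // r_pos.
Qed.

Lemma B_ge0 k : 0 <= B k.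
Proof.
elim: k => [|k IH]; first by rewrite /B /=.
rewrite B_succ; apply: mulr_ge0; first by case/andP: hp2 => h1 h2; lra.
apply: addr_ge0 => //; apply: mulr_ge0; first exact: ltW (D_pos k).
by have := r_le1 k; lra.
Qed.

Lemma D_le_N k : D k <= N k.
Proof. by rewrite N_def; have := B_ge0 k; lra. Qed.

Lemma N_pos k : 0 < N k.
Proof. exact: lt_le_trans (D_pos k) (D_le_N k). Qed.

Lemma N_succ_le k : N k.+1 <= N k.
Proof.
rewrite N_succ; have h3 := D_le_N k; have h4 := r_le1 k; have h6 := D_pos k.
have h5 : D k * r k <= N k.
  apply: le_trans h3; rewrite ger_pMr //.
have h7 : p2 * (D k * r k) <= p2 * N k.
  by rewrite ler_wpM2l //; case/andP: hp2 => h1 h2; lra.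
lra.
Qed.

Lemma N_mono m n : (m <= n)%N -> N n <= N m.
Proof.
move/subnK <-; elim: (n - m)%N => [|k IH]; first by rewrite add0n.
by rewrite addSn; exact: le_trans (N_succ_le _) IH.
Qed.

Lemma sum_N_ge n : n%:R * N n <= \sum_(0 <= i < n) N i.
Proof.
elim: n => [|n IH]; first by rewrite big_geq // mul0r.
rewrite big_nat_recr //= mulrSr mulrDl mul1r.
have h : n%:R * N n.+1 <= n%:R * N n by rewrite ler_wpM2l //; exact: N_succ_le.
have h2 := N_succ_le n.
lra.
Qed.


Hypothesis hc : 0 < c.

Lemma lower_sum (s theta K : R) : 0 < s < 1 -> lam * c = p2 * ((1-s)^+2/s) ->
  theta = (1-s)^+2/s -> K = - ln s + (1 - s) + 1 - p2 ->
  forall n, theta + K - (theta * N n + N n * ln (D n / N n) + K * N n)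
     <= lam * \sum_(0 <= i < n) (t i + c) * N i.
Proof.
move=> hs hlc hth hK; elim => [|n IH].
  rewrite big_geq // /N /not_done /D /= addr0 divr1 ln1; lra.
rewrite big_nat_recr // [lam * (_ + _)]mulrDr.
have := @lower_step R p2 s lam c (D n) (N n) (t n) (r n) theta K hp2 hs lam_gt0 hlc
  (D_pos n) (D_le_N n) (ht n) (rE n) hth hK.
rewrite -D_succ -N_succ.
lra.
Qed.

Lemma phi_le (theta K : R) n :
  theta * N n + N n * ln (D n / N n) + K * N n <= (theta + K) * N n.
Proof.
have h : ln (D n / N n) <= 0.
  apply: ln_le0; rewrite ler_pdivrMr ?N_pos // mul1r; exact: D_le_N.
have h2 : N n * ln (D n / N n) <= 0 by apply: mulr_ge0_le0 => //; exact: ltW (N_pos n).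
lra.
Qed.

Lemma real_final (M e cc X S n : R) : 0 < M -> 0 < e -> 0 < cc -> 0 <= X ->
  M ^+ 2 <= n * cc * e -> M - M * X <= S -> cc * n * X <= S -> M - e <= S.
Proof.
move=> M0 e0 c0 X0 hn h1 h2.
have [h|h] := leP (M * X) e; first lra.
have : M * (cc * n * X) >= M * M.
  have -> : M * (cc * n * X) = cc * n * (M * X) by ring.
  have hn0 : 0 <= cc * n by nra.
  have : cc * n * e <= cc * n * (M * X) by rewrite ler_wpM2l // ltW.
  nra.
move=> h3.
have : M <= cc * n * X by rewrite -(ler_pM2l M0).

lra.
Qed.

Lemma partial_le_E n :
  ((\sum_(0 <= i < n) (t i + c) * N i)%:E <= exp_time p1 p2 c t)%E.
Proof.
rewrite -sumEFin /exp_time.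
apply: (@nneseries_lim_ge R (fun k => ((t k + c) * N k)%:E) xpredT 0 n).
move=> k _ _; rewrite lee_fin; apply: mulr_ge0; last exact: ltW (N_pos k).
by apply: addr_ge0 => //; exact: ltW.
Qed.

Lemma lower_bound_E (M : R) : 0 < M ->
  (forall n, M - M * N n <= \sum_(0 <= i < n) (t i + c) * N i) ->
  (M%:E <= exp_time p1 p2 c t)%E.
Proof.
move=> M0 hS; apply/lee_addgt0Pr => e e0.
set n := (Num.truncn (M ^+ 2 / (c * e))).+1.
have hn : M ^+ 2 <= n%:R * c * e.
  have := truncnS_gt (M ^+ 2 / (c * e)); rewrite -/n.
  rewrite ltr_pdivrMr ?mulr_gt0 // => h; rewrite -mulrA; exact: ltW.
have hcs : c * n%:R * N n <= \sum_(0 <= i < n) (t i + c) * N i.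
  apply: le_trans (_ : c * \sum_(0 <= i < n) N i <= _).
    rewrite -mulrA; apply: ler_wpM2l; first exact: ltW.
    exact: sum_N_ge.
  rewrite mulr_sumr; apply: ler_sum => i _.
  have := ht i; have := N_pos i; nra.
have := @real_final M e c (N n) _ n%:R M0 e0 hc (ltW (N_pos n)) hn (hS n) hcs.
move=> h.
apply: le_trans (_ : ((\sum_(0 <= i < n) (t i + c) * N i) + e)%:E <= _)%E.
  by rewrite lee_fin; lra.
by rewrite EFinD; apply: leeD2r; exact: partial_le_E.
Qed.

Lemma upper_sum (tau alpha beta : R) :
  (forall k, (0 < k)%N -> t k = tau) -> (1 - p1) `^ tau < 1 ->
  alpha = (tau + c) / p2 ->
  beta = (tau + c) * (1 - p1) `^ tau / (1 - (1 - p1) `^ tau) ->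
  forall n, (0 < n)%N ->
  \sum_(0 <= i < n) (t i + c) * N i + (alpha * N n + beta * D n) =
  (t 0 + c) * N 0 + (alpha * N 1 + beta * D 1).
Proof.
move=> htau hr1 ha hb; elim => [//|n IH _].
case: n IH => [|n] IH; first by rewrite big_nat1.
rewrite big_nat_recr // -IH // -addrA; congr (_ + _).
rewrite (N_succ n.+1) (D_succ n.+1) /r htau // ha hb.
have hp : p2 != 0 by case/andP: hp2 => h1 h2; apply/lt0r_neq0.
have hr : 1 - (1 - p1) `^ tau != 0 by apply/lt0r_neq0; lra.
field; apply/andP; split => //.
Qed.

Lemma upper_E (tau alpha beta : R) :
  (forall k, (0 < k)%N -> t k = tau) -> (1 - p1) `^ tau < 1 ->
  alpha = (tau + c) / p2 ->
  beta = (tau + c) * (1 - p1) `^ tau / (1 - (1 - p1) `^ tau) ->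
  0 <= alpha -> 0 <= beta ->
  (exp_time p1 p2 c t <= ((t 0 + c) * N 0 + (alpha * N 1 + beta * D 1))%:E)%E.
Proof.
move=> htau hr1 ha hb a0 b0.
have nn : forall k, (0 <= k)%N -> xpredT k -> (0 <= ((t k + c) * N k)%:E)%E.
  move=> k _ _; rewrite lee_fin; apply: mulr_ge0; last exact: ltW (N_pos k).
  by apply: addr_ge0 => //; exact: ltW.
rewrite /exp_time; apply: (lime_le (is_cvg_nneseries nn)); apply: nearW => n.
rewrite sumEFin lee_fin.
case: n => [|n].
  rewrite big_geq //; apply: addr_ge0.
    by apply: mulr_ge0; [apply: addr_ge0; [exact: ht|exact: ltW]|exact: ltW (N_pos 0)].
  by apply: addr_ge0; apply: mulr_ge0 => //; [exact: ltW (N_pos 1)|exact: ltW (D_pos 1)].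
rewrite -(@upper_sum tau alpha beta htau hr1 ha hb n.+1 (ltn0Sn n)) lerDl.
by apply: addr_ge0; apply: mulr_ge0 => //; [exact: ltW (N_pos _)|exact: ltW (D_pos _)].
Qed.

End Doors.


Lemma powq (R : realType) (p1 y : R) : 0 < p1 < 1 ->
  (1 - p1) `^ y = expR (- (- ln (1 - p1) * y)).
Proof.
move=> hp1; rewrite /powR; case: eqP => [|_]; first by case/andP: hp1 => h1 h2; lra.
by congr expR; ring.
Qed.

Theorem mainTheorem15 (R : realType) (p1 p2 c : R)
  (hp1 : 0 < p1 < 1) (hp2 : 0 < p2 < 1) (hc : 0 < c)
  (tstar : nat -> R) (hopt : optimal p1 p2 c tstar) :
  let q1 := 1 - p1 in
  let theta := - c * ln q1 / p2 in
  let psi := (Num.sqrt (theta ^+ 2 + 4 * theta) - theta) / 2 in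
  let a := (ln (1 / (1 - psi)) + theta / psi + 1) / ln (1 / q1) in
  let b := p2 / ln (1 / q1) in
  ((a - b)%:E <= exp_time p1 p2 c tstar)%E /\ (exp_time p1 p2 c tstar <= a%:E)%E.
Proof.
move=> q1 theta psi a b.
case: hopt => hts hmin.
case/andP: (hp1) => p10 p11; case/andP: (hp2) => p20 p21.
have lnq : ln q1 < 0 by apply: ln_lt0; rewrite /q1; apply/andP; split; lra.
set lam := - ln q1.
have lam0 : 0 < lam by rewrite /lam; lra.
have th0 : 0 < theta.
  rewrite /theta; apply: divr_gt0 => //; nra.
have hlc : lam * c = p2 * theta by rewrite /theta /lam; field; apply/lt0r_neq0.
set S := Num.sqrt (theta ^+ 2 + 4 * theta).
have S0 : 0 <= S by apply: sqrtr_ge0.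
have S2 : S ^+ 2 = theta ^+ 2 + 4 * theta.
  by rewrite sqr_sqrtr //; apply: addr_ge0; [apply: sqr_ge0|lra].
have Sgt : theta < S.
  have : theta ^+ 2 < S ^+ 2 by rewrite S2; lra.
  by rewrite ltr_pXn2r // ?nnegrE ?ltW.
have Slt : S < theta + 2.
  have : S ^+ 2 < (theta + 2) ^+ 2 by rewrite S2; nra.
  by rewrite ltr_pXn2r // ?nnegrE //; lra.
have psiE : psi = (S - theta) / 2 by [].
have psi0 : 0 < psi by rewrite psiE; lra.
have psi1 : psi < 1 by rewrite psiE; lra.
have hpsi : psi ^+ 2 + theta * psi = theta.
  have e : ((S - theta) / 2) ^+ 2 + theta * ((S - theta) / 2) - theta = (S ^+ 2 - (theta ^+ 2 + 4 * theta)) / 4 by field.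
  by rewrite psiE; apply/eqP; rewrite -subr_eq0 e S2 subrr mul0r.
set s := 1 - psi.
have hs : 0 < s < 1 by rewrite /s; apply/andP; split; lra.
have hths : theta = (1 - s) ^+ 2 / s.
  rewrite /s; have -> : 1 - (1 - psi) = psi by ring.
  have hn : 1 - psi != 0 by apply/lt0r_neq0; lra.
  apply: (mulIf hn); rewrite divfK // mulrBr mulr1 -{1}hpsi; ring.
set K := - ln s + (1 - s) + 1 - p2.
have lns : ln s < 0 by apply: ln_lt0.
have K0 : 0 < K by rewrite /K; lra.
have lnq1 : ln (1 / q1) = lam.
  by rewrite div1r lnV // posrE /q1; lra.
have lnsinv : ln (1 / (1 - psi)) = - ln s.
  by rewrite div1r lnV // posrE -/s; case/andP: hs.
have thpsi : theta / psi = psi + theta.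
  have hn : psi != 0 by apply/lt0r_neq0.
  apply: (mulIf hn); rewrite divfK //; rewrite -[in LHS]hpsi; ring.
have aE : a = (- ln s + psi + theta + 1) / lam.
  by rewrite /a lnq1 lnsinv thpsi; congr (_ / _); ring.
have bE : b = p2 / lam by rewrite /b lnq1.
split.
-
  have abE : a - b = (theta + K) / lam.
    by rewrite aE bE /K /s; field; apply/lt0r_neq0.
  rewrite abE; apply: (@lower_bound_E R p1 p2 c tstar hp1 hp2 hts hc ((theta + K) / lam)).
    by apply: divr_gt0 => //; lra.
  move=> n.
  have hlc' : lam * c = p2 * ((1 - s) ^+ 2 / s) by rewrite -hths.
  have h1 := @lower_sum R p1 p2 c tstar hp1 hp2 hts s theta K hs hlc' hths (erefl K) n.
  have h2 := @phi_le R p1 p2 tstar hp1 hp2 hts theta K n.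
  set Nn := not_done p1 p2 tstar n in h1 h2 *.
  set Sn := \sum_(0 <= i < n) _ in h1 *.
  set Ph := ln _ in h1 h2.
  change (- ln (1 - p1)) with lam in h1.
  rewrite -(ler_pM2l lam0).
  have -> : lam * ((theta + K) / lam - (theta + K) / lam * Nn) = (theta + K) - (theta + K) * Nn.
    by field; apply/lt0r_neq0.
  lra.
-
  set x := - ln s / lam.
  set tau := p2 * psi / lam.
  have x0 : 0 <= x by rewrite /x; apply: divr_ge0; lra.
  have tau0 : 0 < tau by rewrite /tau; apply: divr_gt0 => //; apply: mulr_gt0.
  pose t0 : nat -> R := fun k => if k is 0 then x else tau.
  have ht0 : semifrac t0 by case => [|k] //=; exact: ltW.
  apply: le_trans (hmin t0 ht0) _.
  have htau : forall k, (0 < k)%N -> t0 k = tau by case.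
  set r1 := (1 - p1) `^ tau.
  have r1E : r1 = expR (- (p2 * psi)).
    rewrite /r1 powq //; congr expR; rewrite -/q1 -/lam /tau; field; exact/lt0r_neq0.
  have r10 : 0 < r1 by rewrite r1E expR_gt0.
  have pp0 : 0 < p2 * psi by apply: mulr_gt0.
  have hr1b : r1 * (1 + p2 * psi) <= 1.
    rewrite r1E expRN mulrC -/(_ / _) ler_pdivrMr ?expR_gt0 // mul1r.
    exact: expR_ge1Dx.
  have hr1 : r1 < 1 by nra.
  set alpha := (tau + c) / p2.
  set beta := (tau + c) * r1 / (1 - r1).
  have a0 : 0 <= alpha by rewrite /alpha; apply: divr_ge0; lra.
  have b0 : 0 <= beta.
    by rewrite /beta; apply: divr_ge0; [apply: mulr_ge0; lra|lra].
  apply: le_trans (@upper_E R p1 p2 c t0 hp1 hp2 ht0 hc tau alpha beta htau hr1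
     (erefl _) (erefl _) a0 b0) _.
  rewrite lee_fin.
  have qxE : (1 - p1) `^ x = s.
    rewrite powq //; rewrite -/q1 -/lam.
    have -> : - (lam * x) = ln s by rewrite /x; field; exact/lt0r_neq0.
    by rewrite lnK // posrE; case/andP: hs.
  have N0E : not_done p1 p2 t0 0 = 1 by rewrite /not_done /= addr0.
  have D1E : (door_state p1 p2 t0 1).1 = s by rewrite /= mul1r qxE.
  have N1E : not_done p1 p2 t0 1 = s + (1 - p2) * (1 - s).
    by rewrite /not_done /= qxE; ring.
  rewrite N0E D1E N1E aE /=.
  set Q := r1 / (1 - r1).
  have hQ : p2 * psi * Q <= 1.
    rewrite /Q mulrA ler_pdivrMr; last lra.
    nra.
  have cE : c = p2 * theta / lam by rewrite -hlc; field; exact/lt0r_neq0.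
  rewrite -(ler_pM2l lam0).
  have -> : lam * ((x + c) * 1 + (alpha * (s + (1 - p2) * (1 - s)) + beta * s)) =
     - ln s + p2 * theta + (psi + theta) * (s + (1 - p2) * (1 - s)) + p2 * (psi + theta) * s * Q.
    rewrite /x /alpha /beta /tau /Q cE; field.
    apply/and3P; split; apply/lt0r_neq0 => //; lra.
  have -> : lam * ((- ln s + psi + theta + 1) / lam) = - ln s + psi + theta + 1.
    by field; exact/lt0r_neq0.
  have f1 : (psi + theta) * s = psi.
    have e : (psi + theta) * (1 - psi) = psi + (theta - (psi ^+ 2 + theta * psi)) by ring.
    by rewrite /s e hpsi subrr addr0.
  have f2 : p2 * (psi + theta) * s * Q = p2 * psi * Q.
    by rewrite -[in RHS]f1; ring.
  have f3 : p2 * theta + (psi + theta) * (s + (1 - p2) * (1 - s)) = psi + theta.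
    rewrite /s; have e : (psi + theta) * (1 - psi + (1 - p2) * (1 - (1 - psi))) + p2 * theta
       = psi + theta - p2 * (psi ^+ 2 + theta * psi - theta) by ring.
    by rewrite addrC e hpsi subrr mulr0 subr0.
  lra.
Qed.
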